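(* Let $S\subseteq\Sigma^n$ be a double-MDS-code and let $R\subseteq S$ be a prime double-code. Then $S$ is prime if and only if $\backslash_i R=\backslash_{i'}R$ for all $i,i'\in[n]$.
   Context: Let $\Sigma=\{0,1,2,3\}$, $[n]=\{1,\ldots,n\}$. An $i$-line of $\Sigma^n$ is a set of the four words that agree in all coordinates except the $i$th; a line is an $i$-line for some $i$. A double-code is a set meeting every line in $0$ or $2$ elements; a double-MDS-code is a set meeting every line in exactly $2$ elements; a double-code is complementable if contained in a double-MDS-code, and prime if complementable, nonempty and not partitionable into two or more nonempty double-codes. For $S\subseteq\Sigma^n$ and $i\in[n]$, $\mathcal E_i(S)$ is the union of all $i$-lines that meet $S$, and $\backslash_i S=\mathcal E_i(S)\setminus S$. *)

(* Defs.v *)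
From mathcomp Require Import all_boot.
Set Implicit Arguments. Unset Strict Implicit. Unset Printing Implicit Defensive.

(* Sigma = {0,1,2,3} = 'I_4 ; words of length n: functions [n] -> Sigma,
   with [n] = {1..n} represented by 'I_n. *)
Definition word (n : nat) := {ffun 'I_n -> 'I_4}.

Definition iline n (i : 'I_n) (x : word n) : {set word n} :=
  [set y : word n | [forall j : 'I_n, (j != i) ==> (y j == x j)]].

Definition is_line n (L : {set word n}) : Prop :=
  exists (i : 'I_n) (x : word n), L = iline i x.

Definition double_code n (C : {set word n}) : Prop :=
  forall L, is_line L -> #|L :&: C| = 0 \/ #|L :&: C| = 2.

Definition double_MDS n (C : {set word n}) : Prop :=
  forall L, is_line L -> #|L :&: C| = 2.

Definition complementable n (C : {set word n}) : Prop :=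
  exists M : {set word n}, double_MDS M /\ C \subset M.

Definition partitionable n (C : {set word n}) : Prop :=
  exists P : {set {set word n}},
    [/\ partition P C, 2 <= #|P| &
        forall D, D \in P -> D != set0 /\ double_code D].

Definition prime_code n (C : {set word n}) : Prop :=
  [/\ double_code C, complementable C, C != set0 & ~ partitionable C].

Definition Ext n (i : 'I_n) (S : {set word n}) : {set word n} :=
  \bigcup_(L in [set L : {set word n} | [exists x, L == iline i x] & L :&: S != set0]) L.

Definition bslash n (i : 'I_n) (S : {set word n}) : {set word n} :=
  Ext i S :\: S.

(* Main.v *)
Require Import Defs.
From mathcomp Require Import all_boot zify.

Set Implicit Arguments. Unset Strict Implicit. Unset Printing Implicit Defensive.

Lemma iline_refl n (i : 'I_n) x : x \in iline i x.
Proof. by rewrite inE; apply/forallP => j; apply/implyP. Qed.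

Lemma iline_eq n (i : 'I_n) x y : y \in iline i x -> iline i y = iline i x.
Proof.
rewrite inE => /forallP H; apply/setP => z; rewrite !inE.
apply/forallP/forallP => H2 j; apply/implyP => hj;
  move: (implyP (H2 j) hj) (implyP (H j) hj) => /eqP -> /eqP ->; by [].
Qed.

Lemma in_Ext n (i : 'I_n) (S : {set word n}) x :
  reflect (exists2 s, s \in S & s \in iline i x) (x \in Ext i S).
Proof.
apply: (iffP bigcupP).
- move=> [L]; rewrite inE => /andP [/existsP [x0 /eqP ->]] /set0Pn [s].
  rewrite inE => /andP [hs1 hs2] hx; exists s => //.
  by rewrite (iline_eq hx).
- move=> [s hs hl]; exists (iline i x); last exact: iline_refl.
  rewrite inE; apply/andP; split; first by apply/existsP; exists x.
  by apply/set0Pn; exists s; rewrite inE hl.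
Qed.

Lemma key n (S R : {set word n}) :
  double_MDS S -> R \subset S -> double_code R -> R != set0 ->
  (R = S <-> forall i i' : 'I_n, bslash i R = bslash i' R).
Proof.
move=> HS HRS HR /set0Pn [r hr]; split.
- move=> HRSe; rewrite -HRSe in HS.
  have E : forall k : 'I_n, Ext k R = setT.
    move=> k; apply/setP => x; rewrite inE; apply/in_Ext.
    have : #|iline k x :&: R| = 2 by apply: HS; exists k, x.
    move=> h; have : iline k x :&: R != set0 by rewrite -card_gt0 h.
    by case/set0Pn => s; rewrite inE => /andP [h1 h2]; exists s.
  by move=> i i'; rewrite /bslash !E.
- move=> H.
  have RE : forall k, R \subset Ext k R.
    by move=> k; apply/subsetP => x hx; apply/in_Ext; exists x => //; apply: iline_refl.
  have ExtU : forall k, Ext k R = R :|: bslash k R.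
    move=> k; apply/setP => x; rewrite /bslash !inE.
    case hx: (x \in R) => //=; by rewrite (subsetP (RE k)).
  have EE : forall k k', Ext k R = Ext k' R by move=> k k'; rewrite !ExtU (H k k').
  have cl : forall k y z, y \in Ext k R -> z \in iline k y -> z \in Ext k R.
    move=> k y z /in_Ext [s hs hsl] hz; apply/in_Ext; exists s => //.
    by rewrite (iline_eq hz).
  have ind : forall m (y : word n), (forall j : 'I_n, m <= j -> y j = r j) ->
      forall k, y \in Ext k R.
    elim=> [|m IH] y hy.
    + have -> : y = r by apply/ffunP => j; apply: hy.
      by move=> k; apply: (subsetP (RE k)).
    + case: (ltnP m n) => hm; last first.
        apply: IH => j hj; exfalso; move: (ltn_ord j); rewrite ltnNge.
        by rewrite (leq_trans hm hj).
      pose km := Ordinal hm.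
      pose y' : word n := [ffun j => if j == km then r j else y j].
      have hy' : forall k, y' \in Ext k R.
        apply: IH => j hj; rewrite /y' ffunE; case: eqP => // /eqP hne.
        apply: hy; rewrite ltn_neqAle hj andbT.
        by apply: contra hne => /eqP e; apply/eqP/val_inj.
      have hyl : y \in iline km y'.
        rewrite inE; apply/forallP => j; apply/implyP => hj.
        by rewrite /y' ffunE (negbTE hj).
      move=> k; rewrite (EE k km); exact: cl (hy' km) hyl.
  have all : forall y : word n, forall k, y \in Ext k R.
    move=> y; apply: (ind n) => j hj; exfalso; move: (ltn_ord j).
    by rewrite ltnNge hj.
  apply/eqP; rewrite eqEsubset HRS /=; apply/subsetP => x hx.
  case: (posnP n) => hn.
    have -> : x = r by apply/ffunP => j; by move: (ltn_ord j); rewrite {2}hn.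
    exact: hr.
  pose i0 := Ordinal hn.
  have /in_Ext [s hs hsl] := all x i0.
  have hL : is_line (iline i0 x) by exists i0, x.
  have h2 : #|iline i0 x :&: R| = 2.
    case: (HR _ hL) => // h0; exfalso.
    have : s \in iline i0 x :&: R by rewrite inE hsl hs.
    by move: h0 => /eqP; rewrite cards_eq0 => /eqP ->; rewrite inE.
  have hsub : iline i0 x :&: R \subset iline i0 x :&: S by apply: setIS.
  have : iline i0 x :&: R = iline i0 x :&: S.
    apply/eqP; rewrite eqEcard hsub /= h2 (HS _ hL) //.
  move/setP => /(_ x); rewrite [in RHS]inE [in LHS]inE iline_refl hx /= => ->; by [].
Qed.

Theorem proposition7 (n : nat) (S R : {set word n}) :
  double_MDS S -> R \subset S -> prime_code R ->
  (prime_code S <-> forall i i' : 'I_n, bslash i R = bslash i' R).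
Proof.
move=> HS HRS HR; have [HRd _ HR0 _] := HR.
have K := key HS HRS HRd HR0; split; last first.
  by move=> Hb; rewrite -(proj2 K Hb).
move=> [_ _ _ Hnp]; apply/K; apply/eqP; apply/negPn/negP => hne; apply: Hnp.
have hD : S :\: R != set0.
  apply: contra hne => /eqP h; rewrite eqEsubset HRS /=.
  apply/subsetP => x hx; apply/negPn/negP => hxr.
  have : x \in S :\: R by rewrite inE hxr hx.
  by rewrite h inE.
have hdisj : [disjoint R & S :\: R].
  by rewrite -setI_eq0; apply/eqP/setP => x; rewrite !inE; case: (x \in R); rewrite ?andbF.
have hpart1 : partition [set S :\: R] (S :\: R).
  by rewrite /partition cover1 trivIset1 inE eq_sym hD eqxx.
have hU : R :|: (S :\: R) = S.
  apply/setP => x; rewrite !inE; case hx: (x \in R) => //=.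
  by rewrite (subsetP HRS).
exists [set R; S :\: R]; split.
- by rewrite -{2}hU; apply: partitionU1.
- rewrite cards2; case: eqP => // heq; exfalso.
  move/set0Pn: HR0 => [x hx]; move: hdisj; rewrite -setI_eq0 -heq setIid.
  by move=> /eqP h; rewrite h inE in hx.
- move=> D; rewrite !inE => /orP [] /eqP ->; split => //.
  move=> L hL; have := HS L hL; have := HRd L hL.
  have : #|L :&: S| = #|L :&: R| + #|L :&: (S :\: R)|.
    rewrite -cardsUI.
    have -> : L :&: R :&: (L :&: (S :\: R)) = set0.
      apply/setP => x; rewrite !inE; case: (x \in R); by rewrite ?andbF.
    by rewrite cards0 addn0 -setIUr hU.
  move=> E H1 H2; rewrite H2 in E; case: H1 => h; rewrite h in E; [right|left]; lia.
Qed.
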